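(* Let $N\ge 2$, $M\ge 2$, $N_e\ge 2$ be integers, $\theta,\phi\in(-\pi/2,\pi/2)$, $p_t>0$, and let $c_3,c_4\in\mathbb{C}\setminus\{0\}$, $\sigma_r>0$, $L\ge 1$. Let $\mathbf{a}=\mathbf{a}(\theta)\in\mathbb{C}^N$, $\mathbf{b}=\mathbf{b}(\theta)\in\mathbb{C}^M$, $\mathbf{c}=\mathbf{c}(\phi)\in\mathbb{C}^{N_e}$ be the steering vectors and $\mathbf{a}',\mathbf{b}',\mathbf{c}'$ their derivatives (defined in the context). For a Hermitian positive semidefinite $\mathbf{R}_x\in\mathbb{C}^{N\times N}$ with $\mathbf{a}^H\mathbf{R}_x\mathbf{a}>0$ define $$\mathrm{CRB}(\theta)=\frac{Q}{\|\mathbf{b}'\|^2\mathbf{a}^H\mathbf{R}_x\mathbf{a}+\|\mathbf{b}\|^2\mathbf{a}'^H\mathbf{R}_x\mathbf{a}'-\frac{\big|\|\mathbf{b}\|^2\mathbf{a}^H\mathbf{R}_x\mathbf{a}'\big|^2}{\|\mathbf{b}\|^2\mathbf{a}^H\mathbf{R}_x\mathbf{a}}},\qquad Q=\frac{\sigma_r^2}{2|c_3|^2L},$$ $$\mathrm{CRB}(\phi)=\frac{\sigma_r^2}{2|c_4|^2L\|\mathbf{c}'\|^2\,\mathbf{a}^H\mathbf{R}_x\mathbf{a}}.$$ Consider the problem of minimizing $\mathrm{CRB}(\theta)-\mathrm{CRB}(\phi)$ over all Hermitian $\mathbf{R}_x\succeq 0$ with $\mathrm{tr}(\mathbf{R}_x)=p_t$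 (and $\mathbf{a}^H\mathbf{R}_x\mathbf{a}>0$). Then every optimal solution $\mathbf{R}_x$ lies in the span of $\mathbf{a}/\|\mathbf{a}\|$ and $\mathbf{a}'/\|\mathbf{a}'\|$, i.e. $\mathbf{R}_x=\mathbf{U}\boldsymbol{\Lambda}\mathbf{U}^H$ for some $2\times 2$ Hermitian positive semidefinite $\boldsymbol{\Lambda}$, where $\mathbf{U}=[\mathbf{a}/\|\mathbf{a}\|,\ \mathbf{a}'/\|\mathbf{a}'\|]$.
   Context: $j=\sqrt{-1}$. Steering vectors: $\mathbf{a}(\theta)\in\mathbb{C}^N$ has $i$-th entry $e^{-j\pi\sin(\theta)\frac{N-(2i-1)}{2}}$, $i=1,\dots,N$; $\mathbf{b}(\theta)\in\mathbb{C}^M$ has $i$-th entry $e^{-j\pi\sin(\theta)\frac{M-(2i-1)}{2}}$; $\mathbf{c}(\phi)\in\mathbb{C}^{N_e}$ has $i$-th entry $e^{-j\pi\sin(\phi)\frac{N_e-(2i-1)}{2}}$. $\mathbf{a}'=\partial\mathbf{a}/\partial\theta$, $\mathbf{b}'=\partial\mathbf{b}/\partial\theta$, $\mathbf{c}'=\partial\mathbf{c}/\partial\phi$. $\theta$ is the target's angle at the base station and $\phi$ the target's angle at a sensing eavesdropper; $\mathbf{R}_x$ is the transmit sample covariance matrix. *)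

(* Defs.v *)
From HB Require Import structures.
From mathcomp Require Import all_boot all_order all_algebra.
From mathcomp Require Import all_classical all_reals.
From mathcomp Require Import topology normedtype derive trigo.
From mathcomp Require Import complex.

Set Implicit Arguments.
Unset Strict Implicit.
Unset Printing Implicit Defensive.

Import Order.TTheory GRing.Theory Num.Theory numFieldNormedType.Exports.
Local Open Scope ring_scope.
Local Open Scope complex_scope.

Section Defs.
Variable R : realType.
Local Notation C := R[i].

Definition adjmx m n (A : 'M[C]_(m, n)) : 'M[C]_(n, m) :=
  (map_mx (fun z : C => z^*) A)^T.

Definition qform n (u : 'cV[C]_n) (X : 'M[C]_n) (v : 'cV[C]_n) : C :=
  (adjmx u *m X *m v) ord0 ord0.

Definition nrm2 n (v : 'cV[C]_n) : C := \sum_(i < n) `|v i ord0| ^+ 2.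
Definition vnorm n (v : 'cV[C]_n) : C := sqrtC (nrm2 v).

Definition is_herm n (X : 'M[C]_n) : Prop := adjmx X = X.
Definition is_psd n (X : 'M[C]_n) : Prop := forall v : 'cV[C]_n, 0 <= qform v X v.

(* phase of the i-th entry (0-indexed k, i = k+1):
   pi * sin(t) * (n - (2i-1)) / 2 *)
Definition sphase (n : nat) (k : nat) (t : R) : R :=
  pi * sin t * (n%:R - (2 * k + 1)%:R) / 2.

(* steering vector: k-th entry e^{-j sphase} = cos(sphase) - j sin(sphase) *)
Definition steer (n : nat) (t : R) : 'cV[C]_n :=
  \col_(k < n) ((cos (sphase n k t)) +i* (- sin (sphase n k t))).

Definition dsteer (n : nat) (t : R) : 'cV[C]_n :=
  \col_(k < n) ((derive1 (fun s => cos (sphase n k s)) t)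
                +i* (derive1 (fun s => - sin (sphase n k s)) t)).

Definition crb_theta (N M : nat) (theta sigr : R) (c3 : C) (L : nat)
    (Rx : 'M[C]_N) : C :=
  let a := steer N theta in let a' := dsteer N theta in
  let b := steer M theta in let b' := dsteer M theta in
  let Q := (sigr ^+ 2)%:C / (2 * `|c3| ^+ 2 * L%:R) in
  Q / (nrm2 b' * qform a Rx a + nrm2 b * qform a' Rx a'
       - `|nrm2 b * qform a Rx a'| ^+ 2 / (nrm2 b * qform a Rx a)).

Definition crb_phi (N Ne : nat) (theta phi sigr : R) (c4 : C) (L : nat)
    (Rx : 'M[C]_N) : C :=
  let a := steer N theta in let c' := dsteer Ne phi in
  (sigr ^+ 2)%:C / (2 * `|c4| ^+ 2 * L%:R * nrm2 c' * qform a Rx a).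

Definition objective (N M Ne : nat) (theta phi sigr : R) (c3 c4 : C) (L : nat)
    (Rx : 'M[C]_N) : C :=
  crb_theta M theta sigr c3 L Rx - crb_phi Ne theta phi sigr c4 L Rx.

Definition feasible (N : nat) (theta pt : R) (Rx : 'M[C]_N) : Prop :=
  is_herm Rx /\ is_psd Rx /\ \tr Rx = pt%:C /\ 0 < qform (steer N theta) Rx (steer N theta).

Definition optimal (N M Ne : nat) (theta phi pt sigr : R) (c3 c4 : C) (L : nat)
    (Rx : 'M[C]_N) : Prop :=
  feasible theta pt Rx /\
  forall Rx' : 'M[C]_N, feasible theta pt Rx' ->
    objective M Ne theta phi sigr c3 c4 L Rx <= objective M Ne theta phi sigr c3 c4 L Rx'.

Definition Umx (N : nat) (theta : R) : 'M[C]_(N, 2) :=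
  row_mx ((vnorm (steer N theta))^-1 *: steer N theta)
         ((vnorm (dsteer N theta))^-1 *: dsteer N theta).

End Defs.

(* Main.v *)
Require Import Defs.
From HB Require Import structures.
From mathcomp Require Import all_boot all_order all_algebra.
From mathcomp Require Import all_classical all_reals.
From mathcomp Require Import topology normedtype derive trigo realfun.
From mathcomp Require Import complex.
From mathcomp Require Import ring lra zify.
Import Order.TTheory GRing.Theory Num.Theory numFieldNormedType.Exports.
Local Open Scope ring_scope.
Local Open Scope complex_scope.
Set Implicit Arguments.
Unset Strict Implicit.
Unset Printing Implicit Defensive.
Section S.
Variable R : realType.
Local Notation C := R[i].
Implicit Types (m n p : nat).

Lemma adjmxE m n (A : 'M[C]_(m,n)) i j : adjmx A i j = (A j i)^*%R.
Proof. by rewrite /adjmx !mxE. Qed.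

Lemma adjmxM m n p (A : 'M[C]_(m,n)) (B : 'M[C]_(n,p)) :
  adjmx (A *m B) = adjmx B *m adjmx A.
Proof. by apply/matrixP=> i j; rewrite !mxE rmorph_sum; apply: eq_bigr => k _; rewrite !mxE rmorphM mulrC. Qed.

Lemma adjmxK m n (A : 'M[C]_(m,n)) : adjmx (adjmx A) = A.
Proof. by apply/matrixP=> i j; rewrite !adjmxE conjCK. Qed.

Lemma adjmxD m n (A B : 'M[C]_(m,n)) : adjmx (A + B) = adjmx A + adjmx B.
Proof. by apply/matrixP=> i j; rewrite !mxE rmorphD. Qed.

Lemma adjmxN m n (A : 'M[C]_(m,n)) : adjmx (- A) = - adjmx A.
Proof. by apply/matrixP=> i j; rewrite !mxE rmorphN. Qed.

Lemma adjmxZ m n c (A : 'M[C]_(m,n)) : adjmx (c *: A) = c^*%R *: adjmx A.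
Proof. by apply/matrixP=> i j; rewrite !mxE rmorphM. Qed.

Lemma adjmx1 n : adjmx (1%:M : 'M[C]_n) = 1%:M.
Proof. apply/matrixP=> i j; rewrite !mxE eq_sym. by rewrite rmorph_nat. Qed.

Lemma adjmx_vv n (v : 'cV[C]_n) : (adjmx v *m v) ord0 ord0 = nrm2 v.
Proof. rewrite mxE /nrm2; apply: eq_bigr => k _; by rewrite adjmxE normCK mulrC. Qed.


Lemma qform_conj n (X : 'M[C]_n) u v : adjmx X = X -> (qform u X v)^*%R = qform v X u.
Proof.
move=> hX; rewrite /qform -adjmxE.
by rewrite !adjmxM adjmxK hX mulmxA.
Qed.

Lemma addmxE' m n (A B : 'M[C]_(m,n)) i j : (A + B) i j = A i j + B i j.
Proof. by rewrite mxE. Qed.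
Lemma oppmxE' m n (A : 'M[C]_(m,n)) i j : (- A) i j = - A i j.
Proof. by rewrite mxE. Qed.
Lemma scalemxE' m n c (A : 'M[C]_(m,n)) i j : (c *: A) i j = c * A i j.
Proof. by rewrite mxE. Qed.

Lemma qform_exp n (X : 'M[C]_n) u v t :
  qform (u - t *: v) X (u - t *: v) =
  qform u X u - t * qform u X v - t^*%R * qform v X u + t^*%R * t * qform v X v.
Proof.
rewrite /qform adjmxD adjmxN adjmxZ.
rewrite -!mulmxA !(mulmxDr, mulmxDl, mulmxN, mulNmx) -?scalemxAr -?scalemxAl -?scalemxAr -?scalemxAl.
rewrite !(addmxE', oppmxE', scalemxE').
ring.
Qed.

Lemma nrm2_ge0 n (v : 'cV[C]_n) : 0 <= nrm2 v.
Proof. by apply: sumr_ge0 => k _; rewrite exprn_ge0. Qed.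

Lemma nrm2_eq0 n (v : 'cV[C]_n) : nrm2 v = 0 -> v = 0.
Proof.
move=> /eqP; rewrite /nrm2 psumr_eq0 => [/allP h|k _]; last by rewrite exprn_ge0.
apply/matrixP=> i j; rewrite (ord1 j) mxE.
have /h : i \in index_enum 'I_n by rewrite mem_index_enum.
by rewrite /= sqrf_eq0 normr_eq0 => /eqP.
Qed.

Lemma nrm2_gt0 n (v : 'cV[C]_n) k : v k ord0 != 0 -> 0 < nrm2 v.
Proof.
move=> hk; rewrite lt_def nrm2_ge0 andbT; apply/eqP => /nrm2_eq0 h.
by move: hk; rewrite h mxE eqxx.
Qed.


Lemma psd_ker n (X : 'M[C]_n) w : adjmx X = X -> is_psd X ->
  qform w X w = 0 -> X *m w = 0.
Proof.
move=> hX hP hw.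
set u := X *m w.
have e1 : qform w X u = nrm2 u by rewrite -adjmx_vv /u /qform adjmxM hX mulmxA.
have e2 : qform u X w = nrm2 u by rewrite -qform_conj // e1 geC0_conj // nrm2_ge0.
have n0 := nrm2_ge0 u.
set nn := nrm2 u in e1 e2 n0 *; set mm := qform u X u.
have m0 : 0 <= mm := hP u.
have m1 : 0 < mm + 1 by rewrite ltr_wpDl.
set t := nn / (mm + 1).
have ht : t^*%R = t by rewrite geC0_conj // divr_ge0 // ltW.
have := hP (w - t *: u); rewrite qform_exp hw e1 e2 ht => h0.
have key : (mm+1)^+2 * (0 - t*nn - t*nn + t*t*mm) = - (nn^+2 * (mm+2)).
  by rewrite /t; field; rewrite gt_eqF.
have : 0 <= - (nn^+2*(mm+2)) by rewrite -key mulr_ge0 // exprn_ge0 // ltW.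
rewrite oppr_ge0 => hle.
have m2 : 0 < mm + 2 by rewrite ltr_wpDl.
have : nn^+2 * (mm+2) == 0 by rewrite eq_le hle mulr_ge0 // ?exprn_ge0 // ltW.
rewrite mulf_eq0 expf_eq0 /= (gt_eqF m2) orbF => /eqP hn.
exact: nrm2_eq0.
Qed.

Lemma psd_cs n (X : 'M[C]_n) a b : adjmx X = X -> is_psd X ->
  0 < qform a X a -> 0 <= qform b X b - `|qform a X b|^+2 / qform a X a.
Proof.
move=> hX hP hx.
set x := qform a X a in hx *; set z := qform a X b; set y := qform b X b.
have ex : x^*%R = x by rewrite geC0_conj // ltW.
set t := z / x.
have := hP (b - t *: a); rewrite qform_exp -/y -/x -(qform_conj _ _ hX) -/z.
have -> : t^*%R = z^*%R / x.
  by rewrite /t fmorph_div; congr (_ * _^-1); exact: ex.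
rewrite normCK /t.
suff -> : y - z / x * z^*%R - z^*%R / x * z + z^*%R / x * (z / x) * x = y - z * z^*%R / x by [].
by field; rewrite gt_eqF.
Qed.

End S.

Section T.
Variable R : realType.
Local Notation C := R[i].

Definition dph (n k : nat) (t : R) : R := pi * cos t * (n%:R - (2 * k + 1)%:R) / 2.

Lemma sphase_is_derive (n k : nat) (t : R) : is_derive t (1:R) (sphase n k) (dph n k t).
Proof.
have -> : sphase n k = (pi * (n%:R - (2 * k + 1)%:R) / 2) \*: (@sin R).
  by apply/funext => s; rewrite /sphase /= /GRing.scale /=; ring.
have -> : dph n k t = (pi * (n%:R - (2 * k + 1)%:R) / 2) *: cos t.
  by rewrite /dph /GRing.scale /=; ring.
exact: is_deriveZ.
Qed.

Lemma dsteerE (n : nat) (t : R) (k : 'I_n) : dsteer n t k ord0 =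
  (- sin (sphase n k t) * dph n k t) +i* (- (cos (sphase n k t) * dph n k t)).
Proof.
rewrite /dsteer mxE.
have h1 : is_derive t 1 (fun s => cos (sphase n k s)) (- sin (sphase n k t) * dph n k t).
  exact: (@is_derive1_comp _ (@cos R) (sphase n k) t _ _ (is_derive_cos _) (sphase_is_derive n k t)).
have h3 := (@is_derive1_comp _ (@sin R) (sphase n k) t _ _ (is_derive_sin _) (sphase_is_derive n k t)).
have h4 := is_deriveZ (-1) h3.
have h2 : is_derive t 1 (fun s => - sin (sphase n k s)) (- (cos (sphase n k t) * dph n k t)).
  have -> : (fun s => - sin (sphase n k s)) = ((-1 : R) \*: (sin \o sphase n k)) :> (R -> R).
    apply: boolp.funext => s; by rewrite /= scaleN1r.
  by rewrite -(scaleN1r (cos (sphase n k t) * dph n k t)).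
by rewrite !derive1E !derive_val.
Qed.


Lemma steerE (n : nat) (t : R) (k : 'I_n) : steer n t k ord0 =
  (cos (sphase n k t)) +i* (- sin (sphase n k t)).
Proof. by rewrite /steer mxE. Qed.

Lemma conj_steer_dsteer (n : nat) (t : R) (k : 'I_n) :
  (steer n t k ord0)^*%R * dsteer n t k ord0 = 'i * (- dph n k t)%:C.
Proof.
rewrite steerE dsteerE.
move: (cos2Dsin2 (sphase n k t)).
set c := cos _; set s := sin _; set D := dph n k t => h.
apply/eqP; rewrite eq_complex /=; apply/andP; split; apply/eqP.
  ring.
rewrite mul0r add0r mul1r -[RHS]mulr1 -h; ring.
Qed.

Lemma norm_steer (n : nat) (t : R) (k : 'I_n) : `|steer n t k ord0| ^+ 2 = 1.
Proof.
by rewrite -add_Re2_Im2 steerE /= sqrrN cos2Dsin2.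
Qed.

Lemma norm_dsteer (n : nat) (t : R) (k : 'I_n) : `|dsteer n t k ord0| ^+ 2 = (dph n k t ^+ 2)%:C.
Proof.
rewrite -add_Re2_Im2 dsteerE /=; congr (_%:C).
move: (cos2Dsin2 (sphase n k t)).
set c := cos _; set s := sin _; set D := dph n k t => h.
rewrite -[RHS]mulr1 -h; ring.
Qed.


Lemma sum_odd (n : nat) : (\sum_(k < n) (2 * k + 1))%N = (n * n)%N.
Proof.
elim: n => [|n IH]; first by rewrite big_ord0.
rewrite big_ord_recr /= IH; lia.
Qed.

Lemma sum_dph (n : nat) (t : R) : \sum_(k < n) dph n k t = 0.
Proof.
have -> : \sum_(k < n) dph n k t = (pi * cos t / 2) * \sum_(k < n) (n%:R - (2 * k + 1)%:R).
  rewrite mulr_sumr; apply: eq_bigr => k _; rewrite /dph; ring.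
rewrite sumrB sumr_const card_ord -natr_sum sum_odd natrM mulr_natr subrr mulr0 //.
Qed.

Lemma steer_orth (n : nat) (t : R) : (adjmx (steer n t) *m dsteer n t) ord0 ord0 = 0.
Proof.
rewrite mxE.
under eq_bigr => k _ do rewrite adjmxE conj_steer_dsteer.
rewrite -mulr_sumr.
have -> : \sum_(i < n) (- dph n i t)%:C = (- \sum_(i < n) dph n i t)%:C.
  by rewrite -sumrN rmorph_sum.
by rewrite sum_dph oppr0 mulr0.
Qed.


Lemma qformD n (X Y : 'M[C]_n) v w : qform v (X + Y) w = qform v X w + qform v Y w.
Proof. by rewrite /qform mulmxDr mulmxDl mxE. Qed.

Lemma qformZ n (X : 'M[C]_n) c v w : qform v (c *: X) w = c * qform v X w.
Proof. by rewrite /qform -scalemxAr -scalemxAl mxE. Qed.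

Lemma qform_outer n (u u' v w : 'cV[C]_n) :
  qform v (u *m adjmx u') w = (adjmx v *m u) ord0 ord0 * (adjmx u' *m w) ord0 ord0.
Proof. by rewrite /qform !mulmxA -(mulmxA (adjmx v *m u)) [in LHS]mxE big_ord1. Qed.

Lemma qform_mul n (A X B : 'M[C]_n) v w :
  qform v (A *m X *m B) w = qform (adjmx A *m v) X (B *m w).
Proof. by rewrite /qform adjmxM adjmxK !mulmxA. Qed.

Lemma adj_conj n (u v : 'cV[C]_n) : (adjmx v *m u) ord0 ord0 = ((adjmx u *m v) ord0 ord0)^*%R.
Proof. by rewrite -adjmxE adjmxM adjmxK. Qed.

Lemma adjmx_col n (W : 'M[C]_n) i : adjmx (col i W) = row i (adjmx W).
Proof. by apply/matrixP => j k; rewrite !mxE. Qed.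

Lemma col_mul' m n p (A : 'M[C]_(m,n)) (B : 'M[C]_(n,p)) j :
  col j (A *m B) = A *m col j B.
Proof. by apply/matrixP => i k; rewrite !mxE; apply: eq_bigr => l _; rewrite !mxE. Qed.

Lemma tr_qform n (W X : 'M[C]_n) : adjmx W = W ->
  \tr (W *m X *m W) = \sum_i qform (col i W) X (col i W).
Proof.
move=> hW; rewrite /mxtrace; apply: eq_bigr => i _.
by rewrite /qform adjmx_col hW -row_mul -col_mul' -row_mul !mxE.
Qed.

Lemma herm_ker n (X W : 'M[C]_n) : adjmx X = X -> is_psd X -> adjmx W = W ->
  \tr (W *m X *m W) = 0 -> X *m W = 0.
Proof.
move=> hX hP hW; rewrite tr_qform // => /eqP; rewrite psumr_eq0 => [/allP h|i _]; last exact: hP.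
apply/matrixP => j i.
have /h /= /eqP hi : i \in index_enum 'I_n by rewrite mem_index_enum.
have := psd_ker hX hP hi; move/matrixP => /(_ j ord0).
by rewrite -col_mul' !mxE.
Qed.


Lemma nrm2_steer_gt0 (n : nat) (t : R) : (0 < n)%N -> 0 < nrm2 (steer n t).
Proof.
move=> hn; apply: (nrm2_gt0 (k:=Ordinal hn)); apply/eqP => h0.
have := norm_steer t (Ordinal hn); rewrite h0 normr0 expr0n /= => /eqP.
by rewrite eq_sym oner_eq0.
Qed.

Lemma dph0_neq0 (n : nat) (t : R) : (2 <= n)%N -> - (pi / 2) < t < pi / 2 ->
  dph n 0 t != 0.
Proof.
move=> hn ht; rewrite /dph muln0 add0n.
have hc := cos_gt0_pihalf ht.
have h1 : n%:R - 1%:R != 0 :> R.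
  by rewrite subr_eq0 eqr_nat; apply/eqP => e; move: hn; rewrite e.
rewrite mulf_eq0 negb_or invr_eq0 pnatr_eq0 andbT.
by rewrite !mulf_neq0 // ?gt_eqF ?pi_gt0.
Qed.

Lemma nrm2_dsteer_gt0 (n : nat) (t : R) : (2 <= n)%N -> - (pi / 2) < t < pi / 2 ->
  0 < nrm2 (dsteer n t).
Proof.
move=> hn ht; have hn0 : (0 < n)%N by apply: leq_trans hn.
apply: (nrm2_gt0 (k:=Ordinal hn0)); apply/eqP => h0.
have := norm_dsteer t (Ordinal hn0); rewrite h0 normr0 expr0n /= => /eqP.
by rewrite eq_complex /= eqxx andbT eq_sym sqrf_eq0 (negbTE (dph0_neq0 hn ht)).
Qed.


Lemma crb_mono (Q B B' x y z e : C) : 0 < Q -> 0 < B -> 0 < B' -> 0 < x ->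
  0 <= y - `|z| ^+ 2 / x -> 0 < e ->
  Q / (B' * x + B * (y + e) - `|B * z| ^+ 2 / (B * x)) <
  Q / (B' * x + B * y - `|B * z| ^+ 2 / (B * x)).
Proof.
move=> hQ hB hB' hx hy he.
have eB : `|B * z| ^+ 2 = B ^+ 2 * `|z| ^+ 2 by rewrite normrM exprMn ger0_norm // ltW.
have eg : B' * x + B * y - `|B * z| ^+ 2 / (B * x) = B' * x + B * (y - `|z| ^+ 2 / x).
  by rewrite eB; field; rewrite !gt_eqF.
have eg' : B' * x + B * (y + e) - `|B * z| ^+ 2 / (B * x) =
   (B' * x + B * y - `|B * z| ^+ 2 / (B * x)) + B * e by ring.
rewrite eg' eg.
have hg : 0 < B' * x + B * (y - `|z| ^+ 2 / x).
  by rewrite ltr_wpDr ?mulr_ge0 ?mulr_gt0 // ltW.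
have hBe : 0 < B * e by rewrite mulr_gt0.
have hg' : 0 < B' * x + B * (y - `|z| ^+ 2 / x) + B * e by rewrite addr_gt0.
by rewrite ltr_pM2l // ltf_pV2 ?posrE // ltrDl.
Qed.

Lemma adjmx_row m n1 n2 (A : 'M[C]_(m, n1)) (B : 'M[C]_(m, n2)) :
  adjmx (row_mx A B) = col_mx (adjmx A) (adjmx B).
Proof. by rewrite /adjmx map_row_mx tr_row_mx. Qed.

Lemma vnorm_sq n (v : 'cV[C]_n) : 0 <= nrm2 v ->
  (vnorm v)^-1 * ((vnorm v)^-1)^*%R = (nrm2 v)^-1.
Proof.
move=> h; have h0 : 0 <= (vnorm v)^-1 by rewrite invr_ge0 sqrtC_ge0.
rewrite geC0_conj // -expr2 exprVn sqrtCK //. Qed.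

End T.

Unset Implicit Arguments.
Set Strict Implicit.

Theorem lemma1 (R : realType) (N M Ne : nat) (theta phi pt sigr : R)
    (c3 c4 : complex R) (L : nat)
    (hN : (2 <= N)%N) (hM : (2 <= M)%N) (hNe : (2 <= Ne)%N)
    (htheta : - (pi / 2) < theta < pi / 2) (hphi : - (pi / 2) < phi < pi / 2)
    (hpt : 0 < pt) (hc3 : c3 != 0) (hc4 : c4 != 0) (hsig : 0 < sigr)
    (hL : (1 <= L)%N)
    (Rx : 'M[complex R]_N) :
  optimal M Ne theta phi pt sigr c3 c4 L Rx ->
  exists Lam : 'M[complex R]_2,
    is_herm Lam /\ is_psd Lam /\
    Rx = Umx N theta *m Lam *m adjmx (Umx N theta).
Proof.
move=> [[hRh [hRp [hRtr hRx]]] hopt].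
have hN0 : (0 < N)%N by apply: leq_trans hN.
have na_gt0 : 0 < nrm2 (steer N theta) := nrm2_steer_gt0 theta hN0.
have nd_gt0 : 0 < nrm2 (dsteer N theta) := nrm2_dsteer_gt0 hN htheta.
set a := steer N theta in hRx na_gt0 *.
set a' := dsteer N theta in nd_gt0 *.
set na := nrm2 a in na_gt0 *. set nd := nrm2 a' in nd_gt0 *.
have aa : adjmx a *m a = na%:M by rewrite [LHS]mx11_scalar adjmx_vv.
have dd : adjmx a' *m a' = nd%:M by rewrite [LHS]mx11_scalar adjmx_vv.
have ad : adjmx a *m a' = 0.
  by apply/matrixP => i j; rewrite !ord1 steer_orth mxE.
have da : adjmx a' *m a = 0.
  by apply/matrixP => i j; rewrite !ord1 adj_conj steer_orth mxE rmorph0.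
set P := na^-1 *: (a *m adjmx a) + nd^-1 *: (a' *m adjmx a').
have Pa : P *m a = a.
  rewrite /P mulmxDl -!scalemxAl -!mulmxA aa da mulmx0 scaler0 addr0.
  by rewrite mul_mx_scalar scalerA mulVf ?scale1r // gt_eqF.
have Pd : P *m a' = a'.
  rewrite /P mulmxDl -!scalemxAl -!mulmxA dd ad mulmx0 scaler0 add0r.
  by rewrite mul_mx_scalar scalerA mulVf ?scale1r // gt_eqF.
have hP : adjmx P = P.
  rewrite /P adjmxD !adjmxZ !adjmxM !adjmxK !geC0_conj // invr_ge0 ltW //.
have aP : adjmx a *m P = adjmx a by rewrite -[LHS]adjmxK adjmxM adjmxK hP Pa.
have dP : adjmx a' *m P = adjmx a' by rewrite -[LHS]adjmxK adjmxM adjmxK hP Pd.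
have PP : P *m P = P.
  by rewrite {1}/P mulmxDl -!scalemxAl -!mulmxA aP dP.
set W := 1%:M - P.
have hW : adjmx W = W by rewrite /W adjmxD adjmxN adjmx1 hP.
have PW1 : P + W = 1%:M by rewrite /W addrC subrK.
have WW : W *m W = W by rewrite {1}/W mulmxBl mul1mx /W mulmxBr mulmx1 PP subrr subr0.
have PRP : \tr (P *m Rx *m P) = \tr (P *m Rx).
  by rewrite mxtrace_mulC mulmxA PP.
have WRW : \tr (W *m Rx *m W) = \tr (W *m Rx).
  by rewrite mxtrace_mulC mulmxA WW.
set d := \tr (W *m Rx *m W).
have trd : \tr (P *m Rx *m P) + d = \tr Rx.
  by rewrite /d PRP WRW -mxtraceD -mulmxDl PW1 mul1mx.
have d_ge0 : 0 <= d by rewrite /d tr_qform // sumr_ge0 // => i _; exact: hRp.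
set c := d / nd.
have c_ge0 : 0 <= c by rewrite divr_ge0 // ltW.
set R' := P *m Rx *m P + c *: (a' *m adjmx a').
have qa : forall v w, v \in [:: a; a'] -> w \in [:: a; a'] ->
    qform v (P *m Rx *m P) w = qform v Rx w.
  move=> v w; rewrite !inE => /orP[] /eqP -> /orP[] /eqP ->;
  by rewrite qform_mul hP ?Pa ?Pd.
have ex : qform a R' a = qform a Rx a.
  by rewrite qformD qformZ qform_outer da ad !mxE mul0r mulr0 addr0 qa ?inE ?eqxx.
have ez : qform a R' a' = qform a Rx a'.
  by rewrite qformD qformZ qform_outer ad !mxE mul0r mulr0 addr0 qa ?inE ?eqxx ?orbT.
have ey : qform a' R' a' = qform a' Rx a' + d * nd.
  rewrite qformD qformZ qform_outer dd !mxE eqxx mulr1n qa ?inE ?eqxx ?orbT //.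
  by rewrite /c; congr (_ + _); field; rewrite gt_eqF.
have feas : feasible theta pt R'.
  split; [|split; [|split]].
  - rewrite /is_herm /R' adjmxD adjmxZ !adjmxM adjmxK hP. rewrite hRh mulmxA; congr (_ + _ *: _); exact: geC0_conj.
  - rewrite /is_psd => v. rewrite qformD qformZ qform_mul qform_outer (adj_conj a' v) -normCKC.
    rewrite hP. have h1 := hRp (P *m v). have h2 := mulr_ge0 c_ge0 (exprn_ge0 2 (normr_ge0 ((adjmx a' *m v) ord0 ord0))). exact: addr_ge0 h1 h2.
  - rewrite mxtraceD mxtraceZ (mxtrace_mulC a') dd mxtrace_scalar mulr1n /c divfK ?gt_eqF //.
    by rewrite trd hRtr.
  - by rewrite -/a ex.
have key := hopt R' feas.
have hQ : 0 < (sigr ^+ 2)%:C / (2 * `|c3| ^+ 2 * L%:R).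
  apply: divr_gt0; first by rewrite ltcE /= eqxx exprn_gt0.
  by rewrite !mulr_gt0 ?exprn_gt0 ?normr_gt0 // ltr0n.
have hd : d = 0.
  move: d_ge0; rewrite le0r => /orP[/eqP // | dpos]; exfalso.
  move: key; rewrite /objective /crb_theta /crb_phi; cbv zeta.
  rewrite -/a -/a' ex ez ey lerD2r.
  rewrite lt_geF //; apply: crb_mono => //.
  - exact: nrm2_steer_gt0 (leq_trans _ hM).
  - exact: nrm2_dsteer_gt0 hM htheta.
  - exact: psd_cs.
  - by rewrite mulr_gt0.
have hW0 : Rx *m W = 0 by apply: herm_ker hRh hRp hW hd.
have RP : Rx = Rx *m P by rewrite -{1}[Rx]mulmx1 -PW1 mulmxDr hW0 addr0.
have PR : Rx = P *m Rx by rewrite -[LHS]hRh [in LHS]RP adjmxM hP hRh.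
have RPRP : Rx = P *m Rx *m P by rewrite -PR -RP.
set U := Umx N theta.
have UU : U *m adjmx U = P.
  rewrite /U /Umx (adjmx_row ((vnorm a)^-1 *: a) ((vnorm a')^-1 *: a')) (@mul_row_col _ N 1 1 N) !adjmxZ -!scalemxAl -!scalemxAr !scalerA.
  by rewrite !vnorm_sq ?nrm2_ge0.
exists (adjmx U *m Rx *m U); split; [|split].
- by rewrite /is_herm !adjmxM adjmxK hRh !mulmxA.
- move=> v; have := hRp (U *m v).
  by rewrite /qform adjmxM !mulmxA.
- have -> : U *m (adjmx U *m Rx *m U) *m adjmx U = (U *m adjmx U) *m Rx *m (U *m adjmx U).
    by rewrite !mulmxA.
  by rewrite UU -RPRP.
Qed.
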